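(* The set $\mathfrak T=\mathfrak T_\infty\cup\mathfrak T_\boxplus$ of green graph rewriting rules finitely leads to the red spider.
   Context: Fix a positive integer $s$ and let $\mathbb S=\{1,\dots,s\}$ and $\bar{\mathbb S}=\mathbb S\cup\{\emptyset\}$ (elements of $\mathbb S$ are natural numbers, called labels). A green graph is a (finite or infinite) relational structure over the signature consisting of binary relations $H_i$, $i\in\bar{\mathbb S}$; an atom $H_i(x,y)$ is called an edge from $x$ to $y$ labelled $i$. A green graph rewriting rule is a first-order sentence of one of the following two kinds, where $I_1,I_2,I_3,I_4\in\bar{\mathbb S}\setminus\{3,4\}$, $I_1\neq I_3$ and $I_2\neq I_4$: (end-sharing rule) $[I_1,I_2\leftrightarrow I_3,I_4]_{\mathrm{end}}$ denotes $\forall x,x'\,\big[(\exists y\,H_{I_1}(x,y)\wedge H_{I_2}(x',y))\Leftrightarrow(\exists y\,H_{I_3}(x,y)\wedge H_{I_4}(x',y))\big]$; (start-sharing rule) $[I_1,I_2\leftrightarrow I_3,I_4]_{\mathrm{start}}$ denotes $\forall y,y'\,\big[(\exists x\,H_{I_1}(x,y)\wedge H_{I_2}(x,y'))\Leftrightarrow(\exists x\,H_{I_3}(x,y)\wedge H_{I_4}(x,y'))\big]$. A green graph contains a 1-2 pattern if it has edges $H_1(a,b)$ and $H_2(a',b)$ for some vertices $a,a',b$. A set $\mathcal T$ of green graph rewriting rules leads to the red spider (resp. finitely leads to the red spider) if every green graph (resp. every finite green graph) $\mathbb D$ with $\mathbb D\models\mathcal T$ which contains at least one edge labelled $\emptyset$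 also contains a 1-2 pattern. Labels: $\alpha,\beta_0,\eta_0$ are pairwise distinct even elements and $\beta_1,\eta_1$ distinct odd elements of $\mathbb S\setminus\{1,2,3,4\}$. Further, the 32 codes $\langle x,\theta,\delta,\epsilon\rangle$ with $x\in\{n,e,s,w\}$, $\theta\in\{\alpha,\beta\}$, $\delta\in\{d,\bar d\}$, $\epsilon\in\{b,\bar b\}$ are identified injectively with elements of $\mathbb S\setminus\{3,4,\alpha,\beta_0,\beta_1,\eta_0,\eta_1\}$, in such a way that $\langle n,\alpha,\bar d,\bar b\rangle=1$ and $\langle w,\alpha,\bar d,\bar b\rangle=2$. $\mathfrak T_\infty$ consists of the three rules $[\emptyset,\emptyset\leftrightarrow\alpha,\eta_1]_{\mathrm{end}}$, $[\emptyset,\eta_1\leftrightarrow\eta_0,\beta_1]_{\mathrm{start}}$, $[\emptyset,\eta_0\leftrightarrow\eta_1,\beta_0]_{\mathrm{end}}$. $\mathfrak T_\boxplus$ consists of the following 41 rules: $[\beta_0,\beta_0\leftrightarrow\langle n,\beta,d,b\rangle,\langle w,\beta,d,b\rangle]_{\mathrm{end}}$; $[\beta_1,\langle n,\beta,d,b\rangle\leftrightarrow\langle s,\beta,\bar d,b\rangle,\langle e,\beta,d,\bar b\rangle]_{\mathrm{start}}$; $[\beta_0,\langle s,\beta,\bar d,b\rangle\leftrightarrow\langle n,\beta,\bar d,b\rangle,\langle w,\beta,\bar d,\bar b\rangle]_{\mathrm{end}}$; $[\beta_1,\langle n,\beta,\bar d,b\rangle\leftrightarrow\langle s,\beta,\bar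 d,b\rangle,\langle e,\beta,\bar d,\bar b\rangle]_{\mathrm{start}}$; $[\alpha,\langle s,\beta,\bar d,b\rangle\leftrightarrow\langle n,\beta,\bar d,b\rangle,\langle w,\alpha,\bar d,\bar b\rangle]_{\mathrm{end}}$; $[\beta_1,\langle w,\beta,d,b\rangle\leftrightarrow\langle e,\beta,\bar d,b\rangle,\langle s,\beta,d,\bar b\rangle]_{\mathrm{start}}$; $[\beta_0,\langle e,\beta,\bar d,b\rangle\leftrightarrow\langle w,\beta,\bar d,b\rangle,\langle n,\beta,\bar d,\bar b\rangle]_{\mathrm{end}}$; $[\beta_1,\langle w,\beta,\bar d,b\rangle\leftrightarrow\langle e,\beta,\bar d,b\rangle,\langle s,\beta,\bar d,\bar b\rangle]_{\mathrm{start}}$; $[\alpha,\langle e,\beta,\bar d,b\rangle\leftrightarrow\langle w,\beta,\bar d,b\rangle,\langle n,\alpha,\bar d,\bar b\rangle]_{\mathrm{end}}$; and, for all $X,Y\in\{d,\bar d\}$ and $\Theta,\Omega\in\{\alpha,\beta\}$, the rules $[\langle e,\Theta,X,\bar b\rangle,\langle s,\Omega,Y,\bar b\rangle\leftrightarrow\langle n,\Omega,X,\bar b\rangle,\langle w,\Theta,Y,\bar b\rangle]_{\mathrm{end}}$ and $[\langle w,\Theta,X,\bar b\rangle,\langle n,\Omega,Y,\bar b\rangle\leftrightarrow\langle s,\Omega,X,\bar b\rangle,\langle e,\Theta,Y,\bar b\rangle]_{\mathrm{start}}$. *)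

(* Defs.v *)
From mathcomp Require Import all_boot.
Set Implicit Arguments. Unset Strict Implicit. Unset Printing Implicit Defensive.

(* Labels: [Some i] is the label i (a natural number, i in S = {1..s}),
   [None] is the special label "emptyset". *)
Notation label := (option nat).

(* A green graph on vertex type V: H l x y is the edge atom H_l(x,y). *)
Definition green_graph (V : Type) := label -> V -> V -> Prop.

Definition end_rule (V : Type) (H : green_graph V) (I1 I2 I3 I4 : label) : Prop :=
  forall x x' : V,
    (exists y, H I1 x y /\ H I2 x' y) <-> (exists y, H I3 x y /\ H I4 x' y).

Definition start_rule (V : Type) (H : green_graph V) (I1 I2 I3 I4 : label) : Prop :=
  forall y y' : V,
    (exists x, H I1 x y /\ H I2 x y') <-> (exists x, H I3 x y /\ H I4 x y').

Definition has_12_pattern (V : Type) (H : green_graph V) : Prop :=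
  exists a a' b : V, H (Some 1) a b /\ H (Some 2) a' b.

Definition has_empty_edge (V : Type) (H : green_graph V) : Prop :=
  exists x y : V, H None x y.

Inductive dir := dN | dE | dS | dW.
Inductive theta := tAlpha | tBeta.
Inductive delta := dd | ddbar.
Inductive eps := eb | ebbar.

Definition T_infty (V : Type) (H : green_graph V)
    (alpha beta0 eta0 beta1 eta1 : nat) : Prop :=
  [/\ end_rule H None None (Some alpha) (Some eta1),
      start_rule H None (Some eta1) (Some eta0) (Some beta1)
    & end_rule H None (Some eta0) (Some eta1) (Some beta0)].

(* The rule set T_boxplus; [c] is the identification of codes with labels. *)
Definition T_boxplus (V : Type) (H : green_graph V)
    (alpha beta0 beta1 : nat) (c : dir -> theta -> delta -> eps -> nat) : Prop :=
  let C x t d e := Some (c x t d e) in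
  let A := Some alpha in let B0 := Some beta0 in let B1 := Some beta1 in
  end_rule H B0 B0 (C dN tBeta dd eb) (C dW tBeta dd eb) /\
      start_rule H B1 (C dN tBeta dd eb) (C dS tBeta ddbar eb) (C dE tBeta dd ebbar) /\
      end_rule H B0 (C dS tBeta ddbar eb) (C dN tBeta ddbar eb) (C dW tBeta ddbar ebbar) /\
      start_rule H B1 (C dN tBeta ddbar eb) (C dS tBeta ddbar eb) (C dE tBeta ddbar ebbar) /\
      end_rule H A (C dS tBeta ddbar eb) (C dN tBeta ddbar eb) (C dW tAlpha ddbar ebbar) /\
      start_rule H B1 (C dW tBeta dd eb) (C dE tBeta ddbar eb) (C dS tBeta dd ebbar) /\
      end_rule H B0 (C dE tBeta ddbar eb) (C dW tBeta ddbar eb) (C dN tBeta ddbar ebbar) /\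
      start_rule H B1 (C dW tBeta ddbar eb) (C dE tBeta ddbar eb) (C dS tBeta ddbar ebbar) /\
      end_rule H A (C dE tBeta ddbar eb) (C dW tBeta ddbar eb) (C dN tAlpha ddbar ebbar) /\
    (forall (X Y : delta) (Th Om : theta),
        end_rule H (C dE Th X ebbar) (C dS Om Y ebbar) (C dN Om X ebbar) (C dW Th Y ebbar)
        /\ start_rule H (C dW Th X ebbar) (C dN Om Y ebbar) (C dS Om X ebbar) (C dE Th Y ebbar)).

Definition in_S (s i : nat) : bool := (1 <= i <= s).

Definition admissible_labels (s alpha beta0 eta0 beta1 eta1 : nat)
    (c : dir -> theta -> delta -> eps -> nat) : Prop :=
      [&& ~~ odd alpha, ~~ odd beta0, ~~ odd eta0,
          alpha != beta0, alpha != eta0 & beta0 != eta0] /\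
      [&& odd beta1, odd eta1 & beta1 != eta1] /\
      all (fun i => in_S s i && (4 < i)) [:: alpha; beta0; eta0; beta1; eta1] /\
      (forall x1 t1 d1 e1 x2 t2 d2 e2,
          c x1 t1 d1 e1 = c x2 t2 d2 e2 -> [/\ x1 = x2, t1 = t2, d1 = d2 & e1 = e2]) /\
      (forall x t d e, in_S s (c x t d e) &&
          (c x t d e \notin [:: 3; 4; alpha; beta0; beta1; eta0; eta1])) /\
    c dN tAlpha ddbar ebbar = 1 /\ c dW tAlpha ddbar ebbar = 2.

(* Main.v *)
Require Import Defs.
From mathcomp Require Import all_boot.
Set Implicit Arguments. Unset Strict Implicit. Unset Printing Implicit Defensive.

Section Grid.
Variables (V : Type) (H : green_graph V) (c : dir -> theta -> delta -> eps -> nat)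
  (alpha : nat).
Definition lab x t d e := Some (c x t d e).
Hypothesis G1 : forall X Y Th Om, end_rule H (lab dE Th X ebbar) (lab dS Om Y ebbar)
   (lab dN Om X ebbar) (lab dW Th Y ebbar).
Hypothesis G2 : forall X Y Th Om, start_rule H (lab dW Th X ebbar) (lab dN Om Y ebbar)
   (lab dS Om X ebbar) (lab dE Th Y ebbar).

Definition Pat := exists x x' t, H (lab dN tAlpha ddbar ebbar) x t /\ H (lab dW tAlpha ddbar ebbar) x' t.

Definition dEf (k j : nat) := if j == k then dd else ddbar.
Definition dWf (k j : nat) := if j.+1 == k then dd else ddbar.

Variable n : nat.

Inductive Chain (k : nat) : nat -> V -> Prop :=
| ch_last : forall r y y' th, H (lab dE th (dEf k n) ebbar) r y ->
     H (lab dW tAlpha (dWf k n) ebbar) r y' -> Chain k n y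
| ch_cons : forall j r y y' th th', j < n -> H (lab dE th (dEf k j) ebbar) r y ->
     H (lab dW th' (dWf k j) ebbar) r y' -> Chain k j.+1 y' -> Chain k j y.

Lemma g1 X Y Th Om x x' t : H (lab dE Th X ebbar) x t -> H (lab dS Om Y ebbar) x' t ->
  exists t', H (lab dN Om X ebbar) x t' /\ H (lab dW Th Y ebbar) x' t'.
Proof. move=> h1 h2; apply/(G1 X Y Th Om x x'); by exists t. Qed.

Lemma g2 X Y Th Om x y y' : H (lab dW Th X ebbar) x y -> H (lab dN Om Y ebbar) x y' ->
  exists x', H (lab dS Om X ebbar) x' y /\ H (lab dE Th Y ebbar) x' y'.
Proof. move=> h1 h2; apply/(G2 X Y Th Om y y'); by exists x. Qed.

Lemma step k j y : Chain k j y -> forall o s ths thn,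
  H (lab dS ths (dWf k.+1 j) ebbar) o y -> H (lab dN thn (dEf k.+1 j) ebbar) o s ->
  Chain k.+1 j s /\ (thn = tAlpha -> k <> n -> Pat).
Proof.
elim=> {j y}.
- move=> r y y' th hE hW o s ths thn hS hN.
  have [t [h1 h2]] := g1 hE hS.
  have [cn [h3 h4]] := g2 hW h1.
  have [r' [h5 h6]] := g2 h2 hN.
  have [s' [h7 h8]] := g1 h4 h5.
  split; first exact: (ch_last h6 h8).
  move=> eth kn; rewrite eth in h7; exists cn, r', s'.
  have e1 : dEf k n = ddbar by rewrite /dEf; case: eqP => // e; case: kn.
  have e2 : dWf k.+1 n = ddbar by rewrite /dWf; case: eqP => // [[e]]; case: kn.
  by rewrite e1 in h7; rewrite e2 in h8.
- move=> j r y y' th th' jn hE hW _ IH o s ths thn hS hN.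
  have [t [h1 h2]] := g1 hE hS.
  have [cj [h3 h4]] := g2 hW h1.
  have [r' [h5 h6]] := g2 h2 hN.
  have [s' [h7 h8]] := g1 h4 h5.
  have [IH1 IH2] := IH cj s' ths thn h3 h7.
  split => //; exact: (ch_cons jn h6 h8 IH1).
Qed.
End Grid.

Section Walks.
Variables (V : Type) (H : green_graph V) (c : dir -> theta -> delta -> eps -> nat)
  (alpha beta0 beta1 : nat).
Let L x t d e := lab c x t d e.
Hypothesis G1 : forall X Y Th Om, end_rule H (L dE Th X ebbar) (L dS Om Y ebbar)
   (L dN Om X ebbar) (L dW Th Y ebbar).
Hypothesis G2 : forall X Y Th Om, start_rule H (L dW Th X ebbar) (L dN Om Y ebbar)
   (L dS Om X ebbar) (L dE Th Y ebbar).
Let A := Some alpha. Let B0 := Some beta0. Let B1 := Some beta1.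
Hypothesis R1 : end_rule H B0 B0 (L dN tBeta dd eb) (L dW tBeta dd eb).
Hypothesis R2 : start_rule H B1 (L dN tBeta dd eb) (L dS tBeta ddbar eb) (L dE tBeta dd ebbar).
Hypothesis R3 : end_rule H B0 (L dS tBeta ddbar eb) (L dN tBeta ddbar eb) (L dW tBeta ddbar ebbar).
Hypothesis R4 : start_rule H B1 (L dN tBeta ddbar eb) (L dS tBeta ddbar eb) (L dE tBeta ddbar ebbar).
Hypothesis R5 : end_rule H A (L dS tBeta ddbar eb) (L dN tBeta ddbar eb) (L dW tAlpha ddbar ebbar).
Hypothesis R6 : start_rule H B1 (L dW tBeta dd eb) (L dE tBeta ddbar eb) (L dS tBeta dd ebbar).
Hypothesis R7 : end_rule H B0 (L dE tBeta ddbar eb) (L dW tBeta ddbar eb) (L dN tBeta ddbar ebbar).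
Hypothesis R8 : start_rule H B1 (L dW tBeta ddbar eb) (L dE tBeta ddbar eb) (L dS tBeta ddbar ebbar).
Hypothesis R9 : end_rule H A (L dE tBeta ddbar eb) (L dW tBeta ddbar eb) (L dN tAlpha ddbar ebbar).
Variables (a q0 : V).
Hypothesis Aq0 : H A a q0.

Definition P (x y : V) := exists p, H B1 p x /\ H B0 p y.
Fixpoint Ppath (k : nat) (x y : V) : Prop :=
  match k with 0 => x = y | k'.+1 => exists z, Ppath k' x z /\ P z y end.

Lemma endf I1 I2 I3 I4 : end_rule H I1 I2 I3 I4 -> forall x x' y,
  H I1 x y -> H I2 x' y -> exists y', H I3 x y' /\ H I4 x' y'.
Proof. move=> R x x' y h1 h2; apply/(R x x'); by exists y. Qed.
Lemma startf I1 I2 I3 I4 : start_rule H I1 I2 I3 I4 -> forall x y y',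
  H I1 x y -> H I2 x y' -> exists x', H I3 x' y /\ H I4 x' y'.
Proof. move=> R x y y' h1 h2; apply/(R y y'); by exists x. Qed.

Variable n : nat.

Lemma swalk l : forall s u y j th, Ppath l q0 s -> j + l = n ->
  H (L dS tBeta ddbar eb) u s -> H (L dE th (dEf 0 j) ebbar) u y -> Chain H c n 0 j y.
Proof.
elim: l => [|l IH] s u y j th /=.
- move=> <-; rewrite addn0 => <- hS hE.
  have [y' [_ hW]] := endf R5 Aq0 hS.
  exact: (ch_last hE hW).
- move=> [s' [hp [p [hb1 hb0]]]] jl hS hE.
  have [w [h1 h2]] := endf R3 hb0 hS.
  have [u' [h3 h4]] := startf R4 hb1 h1.
  have jn : j < n by rewrite -jl addnS ltnS leq_addr.
  apply: (ch_cons jn hE h2).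
  apply: (IH s' u' w j.+1 tBeta hp _ h3 h4).
  by rewrite addSnnS.
Qed.

Lemma ewalk l : forall e v k y th, Ppath l q0 e -> k < n -> k + l < n ->
  H (L dE tBeta ddbar eb) v e -> H (L dS th (dWf k.+1 0) ebbar) v y ->
  Chain H c n k 0 y -> Pat H c.
Proof.
elim: l => [|l IH] e v k y th /=.
- move=> <- kn _ hE hS hC.
  have [y' [_ hN]] := endf R9 Aq0 hE.
  have [_ top] := step G1 G2 hC hS (hN : H (lab c dN tAlpha (dEf k.+1 0) ebbar) v y').
  apply: top => // ekn; by move: kn; rewrite ekn ltnn.
- move=> [e' [hp [p [hb1 hb0]]]] kn kln hE hS hC.
  have [w [h1 h2]] := endf R7 hb0 hE.
  have [v' [h3 h4]] := startf R8 hb1 h1.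
  have [hC' _] := step G1 G2 hC hS (h2 : H (lab c dN tBeta (dEf k.+1 0) ebbar) v w).
  apply: (IH e' v' k.+1 w tBeta hp _ _ h3 h4 hC').
  + by apply: leq_ltn_trans kln; rewrite -addSnnS leq_addr.
  + by rewrite addSnnS.
Qed.

Lemma core m' s0 e0 p p' q : Ppath n q0 s0 -> H B1 p s0 -> H B0 p q ->
  Ppath m' q0 e0 -> H B1 p' e0 -> H B0 p' q -> m' < n -> Pat H c.
Proof.
move=> hs hp1 hp0 he hq1 hq0 mn.
have [z [h1 h2]] := endf R1 hp0 hq0.
have [u [h3 h4]] := startf R2 hp1 h1.
have [v [h5 h6]] := startf R6 hq1 h2.
have hC : Chain H c n 0 0 z := @swalk n s0 u z 0 tBeta hs (add0n n) h3 h4.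
have n0 : 0 < n by apply: leq_ltn_trans mn.
exact: (@ewalk m' e0 v 0 z tBeta he n0 mn h5 h6 hC).
Qed.
End Walks.

From Stdlib Require Import Classical ClassicalEpsilon.

Lemma pick_pair (V : finType) (g : V -> V) (q0 : V) :
  exists i j, i < j /\ iter i g q0 = iter j g q0.
Proof.
pose f := fun i : 'I_(#|V|.+1) => iter i g q0.
have : ~~ injectiveb f.
  apply/negP => /injectiveP inj; have := leq_card f inj; by rewrite card_ord ltnn.
move=> /injectivePn [i [j ij fij]].
case: (ltngtP i j) => h.
- by exists i, j.
- by exists j, i.
- by move: ij; rewrite (val_inj h) eqxx.
Qed.

Unset Implicit Arguments.
Unset Strict Implicit.

Theorem mainTheorem5 (s alpha beta0 eta0 beta1 eta1 : nat)
    (c : dir -> theta -> delta -> eps -> nat) :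
  admissible_labels s alpha beta0 eta0 beta1 eta1 c ->
  forall (V : finType) (H : green_graph V),
    T_infty H alpha beta0 eta0 beta1 eta1 ->
    T_boxplus H alpha beta0 beta1 c ->
    has_empty_edge H ->
    has_12_pattern H.
Proof.
move=> [_ [_ [_ [_ [_ [c1 c2]]]]]] V H [r1 r2 r3] Tb [x0 [y0 hemp]].
move: Tb => /= [R1 [R2 [R3 [R4 [R5 [R6 [R7 [R8 [R9 G]]]]]]]]].
have [q0 [hA hE1]] := (r1 x0 x0).1 (ex_intro _ y0 (conj hemp hemp)).
have hg : forall q, exists q', H (Some eta1) x0 q ->
    H (Some eta1) x0 q' /\ P H beta0 beta1 q q'.
  move=> q; case: (classic (H (Some eta1) x0 q)) => h; last by exists q.
  have [p [hp0 hp1]] := (r2 y0 q).1 (ex_intro _ x0 (conj hemp h)).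
  have [q' [hq1 hq0]] := (r3 x0 p).1 (ex_intro _ y0 (conj hemp hp0)).
  by exists q' => _; split => //; exists p.
pose g := fun q => proj1_sig (constructive_indefinite_description _ (hg q)).
have hgP : forall q, H (Some eta1) x0 q -> H (Some eta1) x0 (g q) /\ P H beta0 beta1 q (g q).
  move=> q; exact: (proj2_sig (constructive_indefinite_description _ (hg q))).
have hit : forall k, H (Some eta1) x0 (iter k g q0) /\ Ppath H beta0 beta1 k q0 (iter k g q0).
  elim=> [|k [IH1 IH2]] //=.
  have [h1 h2] := hgP _ IH1; split => //; by exists (iter k g q0).
have [i [j [ij fij]]] := pick_pair g q0.
have [hi1 hi2] := hit i; have [hj1 hj2] := hit j.
have [_ [p [hp1 hp0]]] := hgP _ hj1.
have [_ [p' [hq1 hq0]]] := hgP _ hi1.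
rewrite fij in hq0.
have hpat : Pat H c.
  apply: (core _ _ R1 R2 R3 R4 R5 R6 R7 R8 R9 hA hj2 hp1 hp0 hi2 hq1 hq0 ij).
  - move=> X Y Th Om; exact: (G X Y Th Om).1.
  - move=> X Y Th Om; exact: (G X Y Th Om).2.
move: hpat => [x [x' [t [h1 h2]]]].
exists x, x', t; rewrite /lab c1 c2 in h1 h2; by split.
Qed.
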